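(* Let $V$ be the vector module of $gl(m|n)$, $V(\Lambda)$ a finite-dimensional irreducible $gl(m|n)$-module with maximal $\mathbb{Z}$-graded component $V_0(\Lambda)$, and let $\langle\,,\,\rangle$ be the induced non-degenerate invariant sesquilinear form on $V\otimes V(\Lambda)$. If $0\neq v_+\in V\otimes V(\Lambda)$ is a maximal weight vector, then $\langle v_+,V\otimes V_0(\Lambda)\rangle\neq(0)$.
   Context: $L=gl(m|n)$ over $\mathbb{C}$, basis $E_{pq}$ ($1\le p,q\le m+n$), parity $(p)+(q)$ with $(p)=0$ for $p\le m$, $1$ otherwise, graded bracket $[E_{pq},E_{rs}]=\delta_{qr}E_{ps}-(-1)^{((p)+(q))((r)+(s))}\delta_{ps}E_{rq}$; $\mathbb{Z}$-grading $L=L_-\oplus L_0\oplus L_+$ with $L_0=gl(m)\oplus gl(n)$, $L_+=\mathrm{span}\{E_{pq}:p\le m<q\}$, $L_-=\mathrm{span}\{E_{qp}:p\le m<q\}$. The vector module $V$ has basis $|s\rangle$, $E_{pq}|s\rangle=\delta_{qs}|p\rangle$. $V_0(\Lambda)$ is the irreducible $L_0$-submodule of $V(\Lambda)$ generated by the highest weight vector. $V(\Lambda)$ (and likewise $V$) carries a unique non-degenerate sesquilinear form with $\langle av,w\rangle=\langle v,a^\dagger w\rangle$ for $a\in L$, where $(E_{pq})^\dagger=E_{qp}$; the form on $V$ is an inner product. The induced form on $V\otimes V(\Lambda)$ is $\langle v\otimes w,v'\otimes w'\rangle=\langle v,v'\rangle\langle w,w'\rangle$, which is non-degenerate and invariant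 in the same sense. A maximal weight vector is a weight vector annihilated by all $E_{pq}$ with $p<q$. *)

(* Defs.v *)
From HB Require Import structures.
From mathcomp Require Import all_boot all_order all_algebra.
Import Order.TTheory GRing.Theory Num.Theory.
Local Open Scope ring_scope.

(* Indices p : 'I_(m+n) are 0-based: p is even iff p < m (paper: p <= m, 1-based). *)
Definition ipar (m n : nat) (p : 'I_(m + n)) : bool := (m <= p)%N.

Definition epar (m n : nat) (p q : 'I_(m + n)) : bool := ipar m n p (+) ipar m n q.

Definition esign (C : nzRingType) (a b : bool) : C := (-1) ^+ (a && b).

(* A matrix A (acting on column coordinates) acts on a vector v, stored as a
   row vector: A . v  :=  v *m A^T. *)
Definition act (C : nzRingType) (d : nat) (A : 'M[C]_d) (v : 'rV[C]_d) : 'rV[C]_d :=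
  v *m A^T.

(* rho : a Z2-graded representation of gl(m|n) on C^d, with basis parities wpar,
   rho p q = the matrix of E_pq. *)
Definition is_glmn_rep (C : nzRingType) (m n d : nat) (wpar : 'I_d -> bool)
  (rho : 'I_(m + n) -> 'I_(m + n) -> 'M[C]_d) : Prop :=
  (forall p q i j, rho p q i j != 0 -> (wpar i (+) wpar j) = epar m n p q) /\
  (forall p q r s,
     rho p q *m rho r s - esign C (epar m n p q) (epar m n r s) *: (rho r s *m rho p q) =
     (q == r)%:R *: rho p s
       - (esign C (epar m n p q) (epar m n r s) * (p == s)%:R) *: rho r q).

Definition parity_mx (C : nzRingType) (d : nat) (wpar : 'I_d -> bool) : 'M[C]_d :=
  diag_mx (\row_i esign C true (wpar i)).

Definition irreducible_rep (C : fieldType) (m n d : nat) (wpar : 'I_d -> bool)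
  (rho : 'I_(m + n) -> 'I_(m + n) -> 'M[C]_d) : Prop :=
  (0 < d)%N /\
  forall U : 'M[C]_d,
    (forall p q, stablemx U (rho p q)^T) -> stablemx U (parity_mx C d wpar) ->
    (U == (0 : 'M[C]_d))%MS \/ (U == 1%:M)%MS.

Definition highest_weight_vec (C : fieldType) (m n d : nat)
  (rho : 'I_(m + n) -> 'I_(m + n) -> 'M[C]_d) (w : 'rV[C]_d) : Prop :=
  w != 0 /\
  (exists lam : 'I_(m + n) -> C, forall p, act C d (rho p p) w = lam p *: w) /\
  (forall p q : 'I_(m + n), (p < q)%N -> act C d (rho p q) w = 0).

(* the row space of U is the L_0-submodule generated by w, L_0 = span of even E_pq *)
Definition L0_generated (C : fieldType) (m n d : nat)
  (rho : 'I_(m + n) -> 'I_(m + n) -> 'M[C]_d) (w : 'rV[C]_d) (U : 'M[C]_d) : Prop :=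
  (w <= U)%MS /\
  (forall p q, ~~ epar m n p q -> stablemx U (rho p q)^T) /\
  (forall U' : 'M[C]_d, (w <= U')%MS ->
     (forall p q, ~~ epar m n p q -> stablemx U' (rho p q)^T) -> (U <= U')%MS).

(* Elements of V (x) W are matrices X : 'M_(m+n, d), X = sum_s |s> (x) (row s X).
   Action: E_pq (|s> (x) w) = d_qs |p> (x) w + (-1)^{((p)+(q))(s)} |s> (x) E_pq w. *)
Definition tens_act (C : nzRingType) (m n d : nat)
  (rho : 'I_(m + n) -> 'I_(m + n) -> 'M[C]_d) (p q : 'I_(m + n))
  (X : 'M[C]_(m + n, d)) : 'M[C]_(m + n, d) :=
  \matrix_(s, j) ((s == p)%:R * X q j
                  + esign C (epar m n p q) (ipar m n s) * (X *m (rho p q)^T) s j).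

Definition maximal_weight_vec (C : nzRingType) (m n d : nat)
  (rho : 'I_(m + n) -> 'I_(m + n) -> 'M[C]_d) (X : 'M[C]_(m + n, d)) : Prop :=
  X != 0 /\
  (exists lam : 'I_(m + n) -> C, forall p, tens_act C m n d rho p p X = lam p *: X) /\
  (forall p q : 'I_(m + n), (p < q)%N -> tens_act C m n d rho p q X = 0).

Definition formW (C : numClosedFieldType) (d : nat) (G : 'M[C]_d) (v w : 'rV[C]_d) : C :=
  \sum_(i < d) \sum_(j < d) (v 0 i)^* * G i j * w 0 j.

Definition invariant_form (C : numClosedFieldType) (m n d : nat)
  (rho : 'I_(m + n) -> 'I_(m + n) -> 'M[C]_d) (G : 'M[C]_d) : Prop :=
  forall p q v w, formW C d G (act C d (rho p q) v) w = formW C d G v (act C d (rho q p) w).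

(* induced form on V (x) W; the form on V is the standard inner product <s|t> = d_st *)
Definition formVW (C : numClosedFieldType) (m n d : nat) (G : 'M[C]_d)
  (X Y : 'M[C]_(m + n, d)) : C :=
  \sum_(s < m + n) formW C d G (row s X) (row s Y).

(* Main.v *)
Require Import Defs.
From HB Require Import structures.
From mathcomp Require Import all_boot all_order all_algebra.
From mathcomp Require Import ring zify.
Import Order.TTheory GRing.Theory Num.Theory.
Local Open Scope ring_scope.

Section Aux.
Variables (C : numClosedFieldType) (m n d : nat) (wpar : 'I_d -> bool)
  (rho : 'I_(m + n) -> 'I_(m + n) -> 'M[C]_d) (G : 'M[C]_d).

Definition opT p q : 'M[C]_d := (rho p q)^T.
Definition Pm : 'M[C]_d := parity_mx C d wpar.
Definition cvec (z : 'rV[C]_d) : 'cV[C]_d := (map_mx (fun x : C => x^*) z *m G)^T.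

Lemma formW_cvec z x : formW C d G z x = (x *m cvec z) 0 0.
Proof.
rewrite /formW /cvec !mxE exchange_big /=; apply: eq_bigr => j _.
rewrite !mxE big_distrr /=; apply: eq_bigr => i _.
by rewrite !mxE mulrC.
Qed.

Lemma cvecD z1 z2 : cvec (z1 + z2) = cvec z1 + cvec z2.
Proof. by rewrite /cvec -linearD -mulmxDl; congr (_ *m _)^T; apply/matrixP=> i j; rewrite !mxE rmorphD. Qed.

Lemma cvecZ a z : cvec (a *: z) = a^* *: cvec z.
Proof. by rewrite /cvec -linearZ scalemxAl; congr (_ *m _)^T; apply/matrixP=> i j; rewrite !mxE rmorphM. Qed.

Lemma cvecN z : cvec (- z) = - cvec z.
Proof. by rewrite -scaleN1r cvecZ rmorphN rmorph1 scaleN1r. Qed.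

Lemma cvec_eq0 z : G \in unitmx -> cvec z = 0 -> z = 0.
Proof.
move=> uG /eqP; rewrite /cvec trmx_eq0 => /eqP h.
have h2 : map_mx (fun x : C => x^*) z = 0.
  by rewrite -[LHS]mulmx1 -(mulmxV uG) mulmxA h mul0mx.
apply/matrixP=> i j; have := congr1 (fun M : 'M[C]_(1,d) => M i j) h2; rewrite !mxE => /eqP.
by rewrite conjC_eq0 => /eqP.
Qed.

Lemma mx_eq0_rows k l (A : 'M[C]_(k, l)) : (forall x : 'rV_k, x *m A = 0) -> A = 0.
Proof. by move=> h; apply/row_matrixP=> i; rewrite row0 -[A]mul1mx row_mul h. Qed.


Hypothesis hom : forall p q i j, rho p q i j != 0 -> (wpar i (+) wpar j) = epar m n p q.
Hypothesis hbr : forall p q r s,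
     rho p q *m rho r s - esign C (epar m n p q) (epar m n r s) *: (rho r s *m rho p q) =
     (q == r)%:R *: rho p s
       - (esign C (epar m n p q) (epar m n r s) * (p == s)%:R) *: rho r q.

Lemma Pm_opT p q : Pm *m opT p q = esign C true (epar m n p q) *: (opT p q *m Pm).
Proof.
rewrite /Pm /parity_mx mul_diag_mx mul_mx_diag; apply/matrixP => i j; rewrite !mxE.
have [->|nz] := eqVneq (rho p q j i) 0; first by rewrite !(mulr0, mul0r).
rewrite -(hom _ _ _ _ nz) /esign /=.
case: (wpar i); case: (wpar j) => /=.
all: ring.
Qed.

Lemma Pm2 : Pm *m Pm = 1%:M.
Proof.
rewrite /Pm /parity_mx mulmx_diag; apply/matrixP => i j; rewrite !mxE.
by case: (wpar i) => /=; rewrite ?expr0 ?expr1 ?mulr1 ?mulrNN ?mulr1.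
Qed.

Definition esg p q r s := esign C (epar m n p q) (epar m n r s).

Lemma opT_br p q r s : opT r s *m opT p q =
  esg p q r s *: (opT p q *m opT r s) + (q == r)%:R *: opT p s
   - (esg p q r s * (p == s)%:R) *: opT r q.
Proof.
have E : rho p q *m rho r s = esg p q r s *: (rho r s *m rho p q) +
   ((q == r)%:R *: rho p s - (esg p q r s * (p == s)%:R) *: rho r q).
  by rewrite -hbr addrC subrK.
rewrite /opT -!trmx_mul E raddfD raddfB /= !linearZ /= addrA.
by rewrite trmx_mul.
Qed.


Lemma opT_Pm p q : opT p q *m Pm = esign C true (epar m n p q) *: (Pm *m opT p q).
Proof.
rewrite Pm_opT scalerA /esign.
by case: (epar m n p q) => /=; rewrite ?expr0 ?expr1 ?mulr1 ?mulrNN ?mulr1 scale1r.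
Qed.

Definition Fsum (T : 'M[C]_d) : 'M[C]_d :=
  (\sum_(pq : 'I_(m + n) * 'I_(m + n) | (pq.2 < pq.1)%N) (T *m opT pq.1 pq.2))%MS.

Fixpoint Tk (y : 'rV[C]_d) (k : nat) : 'M[C]_d :=
  if k is k'.+1 then (<<y>> + Fsum (Tk y k'))%MS else <<y>>%MS.

Lemma Fsum_mono A B : (A <= B)%MS -> (Fsum A <= Fsum B)%MS.
Proof. by move=> le; apply: sumsmxS => i _; apply: submxMr. Qed.

Lemma Fsum_sup (T : 'M[C]_d) (p q : 'I_(m + n)) : (q < p)%N -> (T *m opT p q <= Fsum T)%MS.
Proof. by move=> h; apply: (sumsmx_sup (p, q)). Qed.

Lemma Tk_mono y k : (Tk y k <= Tk y k.+1)%MS.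
Proof.
elim: k => [|k IH] /=; first exact: addsmxSl.
by apply: addsmxS => //; apply: Fsum_mono.
Qed.

Lemma Tk_incr y k l : (k <= l)%N -> (Tk y k <= Tk y l)%MS.
Proof.
move/subnKC <-; elim: (l - k)%N => [|i IH]; first by rewrite addn0.
by apply: submx_trans IH _; rewrite addnS; apply: Tk_mono.
Qed.

Lemma y_sub_Tk y k : (y <= Tk y k)%MS.
Proof.
apply: (submx_trans _ (Tk_incr y 0 k (leq0n k))); by rewrite /= genmxE.
Qed.

Lemma Tk_any y k : (forall p q : 'I_(m + n), (p <= q)%N -> (Tk y k *m opT p q <= Tk y k)%MS) ->
  forall p q : 'I_(m + n), (Tk y k *m opT p q <= Tk y k.+1)%MS.
Proof.
move=> IH p q; case: (leqP p q) => [le|lt].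
  exact: submx_trans (IH _ _ le) (Tk_mono y k).
by rewrite /=; apply: submx_trans (addsmxSr _ _); apply: Fsum_sup.
Qed.

Lemma Tk_up y (hy : forall p q : 'I_(m + n), (p <= q)%N -> (y *m opT p q <= y)%MS) k :
  forall p q : 'I_(m + n), (p <= q)%N -> (Tk y k *m opT p q <= Tk y k)%MS.
Proof.
have h0 : forall p q : 'I_(m + n), (p <= q)%N -> (<<y>>%MS *m opT p q <= <<y>>%MS)%MS.
  move=> p q le; apply: submx_trans (submxMr _ (_ : <<y>> <= y)%MS) _.
    by rewrite genmxE.
  by rewrite genmxE; apply: hy.
elim: k => [|k IH] p q le //=; first exact: h0.
rewrite addsmxMr addsmx_sub; apply/andP; split.
  exact: submx_trans (h0 _ _ le) (addsmxSl _ _).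
rewrite /Fsum sumsmxMr; apply/sumsmx_subP => [[r s]] /= hsr.
rewrite -mulmxA opT_br mulmxBr mulmxDr -!scalemxAr.
have hany := @Tk_any y k IH.
apply: addmx_sub; first apply: addmx_sub.
- apply: scalemx_sub; rewrite mulmxA.
  apply: submx_trans (submxMr _ (IH _ _ le)) _.
  by apply: submx_trans (addsmxSr _ _); apply: Fsum_sup.
- by apply: scalemx_sub; apply: hany.
- by rewrite eqmx_opp; apply: scalemx_sub; apply: hany.
Qed.

Lemma Tk_P y (hyP : (y *m Pm <= y)%MS) k : (Tk y k *m Pm <= Tk y k)%MS.
Proof.
have h0 : (<<y>>%MS *m Pm <= <<y>>%MS)%MS.
  apply: submx_trans (submxMr _ (_ : <<y>> <= y)%MS) _; first by rewrite genmxE.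
  by rewrite genmxE.
elim: k => [|k IH] //=.
rewrite addsmxMr addsmx_sub; apply/andP; split.
  exact: submx_trans h0 (addsmxSl _ _).
rewrite /Fsum sumsmxMr; apply/sumsmx_subP => [[r s]] /= hsr.
rewrite -mulmxA opT_Pm -scalemxAr; apply: scalemx_sub; rewrite mulmxA.
apply: submx_trans (submxMr _ IH) _.
by apply: submx_trans (addsmxSr _ _); apply: Fsum_sup.
Qed.

Lemma stab (f : nat -> 'M[C]_d) : (forall k, (f k <= f k.+1)%MS) ->
  exists K, (f K.+1 <= f K)%MS.
Proof.
move=> mono.
have h : forall k, (exists K, (f K.+1 <= f K)%MS) \/ (k <= \rank (f k))%N.
  elim=> [|k [ex|IH]]; [by right | by left |].
  case: (boolP (f k.+1 <= f k)%MS) => [le|nle]; first by left; exists k.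
  right; apply: leq_ltn_trans IH _; apply: rank_ltmx; by rewrite ltmxE mono nle.
case: (h d.+1) => // hr; have := rank_leq_col (f d.+1).
by rewrite leqNgt (leq_trans _ hr).
Qed.

Lemma gen (irr : irreducible_rep C m n d wpar rho) (y : 'rV[C]_d) (y0 : y != 0)
  (hy : forall p q : 'I_(m + n), (p <= q)%N -> (y *m opT p q <= y)%MS) (hyP : (y *m Pm <= y)%MS) :
  exists T, ((1%:M : 'M[C]_d) <= y + Fsum T)%MS.
Proof.
have [K hK] := @stab (Tk y) (Tk_mono y).
have stU : forall p q : 'I_(m + n), stablemx (Tk y K) (rho p q)^T.
  move=> p q; rewrite -/(opT p q); case: (leqP p q) => [le|lt].
    exact: Tk_up.
  apply: submx_trans hK; rewrite /=; apply: submx_trans (addsmxSr _ _).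
  exact: Fsum_sup.
case: (irr.2 _ stU (@Tk_P y hyP K)) => /andP [h1 h2].
  by have := submx_trans (y_sub_Tk y K) h1; rewrite submx0 (negbTE y0).
exists (Tk y K); apply: submx_trans h2 _; apply: submx_trans (Tk_mono y K) _.
by apply: addsmxS => //; rewrite genmxE.
Qed.

Lemma low_ann (inv : invariant_form C m n d rho G) z
  (hz : forall p q : 'I_(m + n), (p < q)%N -> z *m opT p q = 0) T : Fsum T *m cvec z = 0.
Proof.
apply/eqP; rewrite -sub_kermx; apply/sumsmx_subP => [[r s]] /= hsr.
rewrite sub_kermx -mulmxA; apply/eqP.
suff -> : opT r s *m cvec z = 0 by rewrite mulmx0.
apply: mx_eq0_rows => x; apply/matrixP => i j; rewrite !ord1 mulmxA -formW_cvec mxE.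
have := inv s r z x; rewrite /act -/(opT s r) -/(opT r s) hz // => <-.
by rewrite formW_cvec /cvec (_ : map_mx _ 0 = 0) ?mul0mx ?linear0 ?mulmx0 ?mxE //;
   apply/matrixP=> a b; rewrite !mxE rmorph0.
Qed.


Definition HW (lam : 'I_(m + n) -> C) (x : 'rV[C]_d) :=
  (forall p q : 'I_(m + n), (p < q)%N -> x *m opT p q = 0) /\
  (forall p : 'I_(m + n), x *m opT p p = lam p *: x).

Lemma HW_sub lam x : HW lam x -> forall p q : 'I_(m + n), (p <= q)%N -> (x *m opT p q <= x)%MS.
Proof.
move=> [h1 h2] p q; rewrite leq_eqVlt => /orP [/eqP e|lt]; last by rewrite h1 // sub0mx.
have -> : q = p by apply: val_inj.
by rewrite h2 scalemx_sub.
Qed.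

Lemma HW_P lam x : HW lam x -> HW lam (x *m Pm).
Proof.
move=> [h1 h2]; split.
  by move=> p q lt; rewrite -mulmxA Pm_opT -scalemxAr mulmxA h1 // mul0mx scaler0.
move=> p; rewrite -mulmxA Pm_opT -scalemxAr mulmxA h2 /epar addbb /esign /=.
by rewrite expr0 scale1r scalemxAl.
Qed.

Lemma HW_D lam x y : HW lam x -> HW lam y -> HW lam (x + y).
Proof.
move=> [h1 h2] [k1 k2]; split.
  by move=> p q lt; rewrite mulmxDl h1 // k1 // addr0.
by move=> p; rewrite mulmxDl h2 k2 scalerDr.
Qed.

Lemma HW_N lam x : HW lam x -> HW lam (- x).
Proof.
move=> [h1 h2]; split.
  by move=> p q lt; rewrite mulNmx h1 // oppr0.
by move=> p; rewrite mulNmx h2 scalerN.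
Qed.

Lemma cvec0 : cvec 0 = 0.
Proof. by rewrite -(scale0r 0) cvecZ rmorph0 scale0r. Qed.

Lemma ker_full (c : 'cV[C]_d) : ((1%:M : 'M[C]_d) <= kermx c)%MS -> c = 0.
Proof. by rewrite sub_kermx mul1mx => /eqP. Qed.

Lemma mx11_eq0 (A : 'M[C]_1) : A 0 0 = 0 -> A = 0.
Proof. by move=> h; apply/matrixP => i j; rewrite !ord1 h mxE. Qed.

Lemma homog (irr : irreducible_rep C m n d wpar rho) (inv : invariant_form C m n d rho G)
  (uG : G \in unitmx) lam w : HW lam w ->
  (w *m Pm <= w)%MS.
Proof.
move=> hw.
set a := w + w *m Pm; set b := w - w *m Pm.
have ha : HW lam a by apply: HW_D => //; apply: HW_P.
have hb : HW lam b by apply: HW_D => //; apply/HW_N/HW_P.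
have aP : a *m Pm = a by rewrite /a mulmxDl -mulmxA Pm2 mulmx1 addrC.
have bP : b *m Pm = - b by rewrite /b mulmxBl -mulmxA Pm2 mulmx1 opprB.
have [a0|a0] := eqVneq a 0.
  have -> : w *m Pm = - w by apply/eqP; rewrite -addr_eq0 addrC -/a a0.
  by rewrite eqmx_opp.
have [b0|b0] := eqVneq b 0.
  have -> : w *m Pm = w by apply/eqP; rewrite -subr_eq0 -opprB oppr_eq0 -/b b0.
  exact: submx_refl.
exfalso.
have hbP : (b *m Pm <= b)%MS by rewrite bP eqmx_opp.
have [T hT] := @gen irr b b0 (@HW_sub lam b hb) hbP.
have Fa := @low_ann inv a ha.1 T; have Fb := @low_ann inv b hb.1 T.
set beta := (b *m cvec b) 0 0.
have beta0 : beta != 0.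
  apply/eqP => e; move/eqP: b0; apply; apply: (cvec_eq0 _ uG); apply: ker_full.
  apply: submx_trans hT _; rewrite addsmx_sub !sub_kermx Fb eqxx andbT.
  by apply/eqP/mx11_eq0.
set alpha := (b *m cvec a) 0 0.
set kap := (alpha / beta)^*.
have akb : a = kap *: b.
  apply/eqP; rewrite -subr_eq0; apply/eqP/(cvec_eq0 _ uG)/ker_full.
  apply: submx_trans hT _; rewrite addsmx_sub !sub_kermx.
  rewrite cvecD cvecN cvecZ conjCK !mulmxDr !mulmxN -!scalemxAr Fa Fb scaler0 subr0 eqxx andbT.
  apply/eqP/mx11_eq0.
  have -> : (b *m cvec a - (alpha / beta) *: (b *m cvec b)) 0 0 = alpha - alpha / beta * beta by rewrite /alpha /beta !mxE.
  by rewrite mulfVK // subrr.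
have : a = - a by rewrite -{1}aP akb -scalemxAl bP scalerN.
move/eqP; rewrite -subr_eq0 opprK -mulr2n -scaler_nat scaler_eq0 pnatr_eq0 /=.
by rewrite (negbTE a0).
Qed.

Lemma key (irr : irreducible_rep C m n d wpar rho) (inv : invariant_form C m n d rho G)
  (uG : G \in unitmx) lam (w : 'rV[C]_d) (w0 : w != 0) : HW lam w ->
  forall v : 'rV[C]_d, (forall p q : 'I_(m + n), (p < q)%N -> v *m opT p q = 0) ->
  w *m cvec v = 0 -> v = 0.
Proof.
move=> hw v hv wv.
have [T hT] := @gen irr w w0 (@HW_sub lam w hw) (@homog irr inv uG lam w hw).
apply/(cvec_eq0 _ uG)/ker_full; apply: submx_trans hT _.
by rewrite addsmx_sub !sub_kermx wv (@low_ann inv v hv T) !eqxx.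
Qed.

End Aux.

Theorem lemma8 (C : numClosedFieldType) (m n d : nat) (wpar : 'I_d -> bool)
  (rho : 'I_(m + n) -> 'I_(m + n) -> 'M[C]_d) (G : 'M[C]_d)
  (w0 : 'rV[C]_d) (U0 : 'M[C]_d) (vp : 'M[C]_(m + n, d)) :
  is_glmn_rep C m n d wpar rho ->
  irreducible_rep C m n d wpar rho ->
  G \in unitmx ->
  invariant_form C m n d rho G ->
  highest_weight_vec C m n d rho w0 ->
  L0_generated C m n d rho w0 U0 ->
  vp != 0 ->
  maximal_weight_vec C m n d rho vp ->
  exists X : 'M[C]_(m + n, d), (X <= U0)%MS /\ formVW C m n d G vp X != 0.
Proof.
move=> [hom hbr] irr uG inv [w0nz [[lam hlam] hup]] [w0U _] vpnz [_ [_ hmax]].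
have hw : HW C m n d rho lam w0.
  by split; [move=> p q lt; exact: (hup p q lt) | move=> p; exact: (hlam p)].
have keyv := @key C m n d wpar rho G hom hbr irr inv uG lam w0 w0nz hw.
case: (boolP [exists s, exists i, formW C d G (row s vp) (row i U0) != 0]).
  move=> /existsP [s /existsP [i h]]; exists (delta_mx s i *m U0); split.
    exact: submxMl.
  suff -> : formVW C m n d G vp (delta_mx s i *m U0) = formW C d G (row s vp) (row i U0) by [].
  rewrite /formVW (bigD1 s) //= big1 ?addr0.
    rewrite row_mul [row i U0]rowE; congr formW; congr (_ *m _).
    by apply/matrixP => a b; rewrite !ord1 !mxE !eqxx.
  move=> t ts; rewrite row_mul (_ : row t (delta_mx s i) = 0) ?mul0mx.
    by rewrite formW_cvec mul0mx mxE.
  by apply/matrixP => a b; rewrite !mxE (negbTE ts).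
rewrite negb_exists => /forallP hall; exfalso.
have hrow : forall s, w0 *m cvec C d G (row s vp) = 0.
  move=> s; have [D ->] := submxP w0U; rewrite -mulmxA.
  suff -> : U0 *m cvec C d G (row s vp) = 0 by rewrite mulmx0.
  apply/row_matrixP => i; rewrite row_mul row0; apply/matrixP => a b.
  rewrite !ord1 -formW_cvec mxE.
  by have := hall s; rewrite negb_exists => /forallP /(_ i); rewrite negbK => /eqP.
have allz : forall k (s : 'I_(m + n)), (m + n - s <= k)%N -> row s vp = 0.
  elim=> [|k IH] s hs.
    by move: hs; rewrite leqn0 subn_eq0 leqNgt ltn_ord.
  apply: keyv (hrow s) => p q lt; apply/rowP => j.
  have := congr1 (fun M : 'M[C]_(m + n, d) => M s j) (hmax p q lt).
  rewrite /tens_act -row_mul !mxE.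
  have -> : (s == p)%:R * vp q j = 0.
    case: (eqVneq s p) => [sp|]; last by rewrite mul0r.
    have : row q vp = 0 by apply: IH; move: hs lt; rewrite -sp; lia.
    by move/rowP/(_ j); rewrite !mxE => ->; rewrite mulr0.
  by rewrite add0r => /eqP; rewrite mulf_eq0 signr_eq0 /= => /eqP.
by move/eqP: vpnz; apply; apply/row_matrixP => s; rewrite row0; apply: (allz (m + n)); apply: leq_subr.
Qed.
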